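(* Let $\mathcal A\subset\mathbb R^d$ be finite and nonempty, $\mathcal D=\mathrm{conv}(\mathcal A)$, and let $f$ be convex and differentiable on an open set containing $\mathcal D$ and $\mu$-strongly convex on $\mathcal D$ with respect to the Euclidean norm, $\mu\ge0$ (i.e. $f(y)-f(x)-\langle\nabla f(x),y-x\rangle\ge\frac\mu2\|y-x\|^2$ for all $x,y\in\mathcal D$). Then $\mu_f^{A}\ge\mu\cdot\mathrm{PWidth}(\mathcal A)^2$.
   Context: Euclidean norm and inner product. For a finite $\mathcal B\subseteq\mathbb R^d$ and $x\in\mathrm{conv}(\mathcal B)$, $\mathcal S_x(\mathcal B)$ is the family of subsets $S\subseteq\mathcal B$ such that $x$ is a proper convex combination of all elements of $S$ (all coefficients positive); write $\mathcal S_x=\mathcal S_x(\mathcal A)$. For $r\ne0$, $\mathrm{PdirW}(\mathcal B,r,x):=\min_{S\in\mathcal S_x(\mathcal B)}\max_{s\in\mathcal B,\,v\in S}\langle r/\|r\|,s-v\rangle$, and $\mathrm{PWidth}(\mathcal A):=\inf\{\mathrm{PdirW}(\mathcal K\cap\mathcal A,r,x)\}$ over all nonempty faces $\mathcal K$ of $\mathrm{conv}(\mathcal A)$ (including itself), $x\in\mathcal K$, $r\in\mathrm{cone}(\mathcal K-x)\setminus\{0\}$. For $x\in\mathcal D$: $s_f(x)\in\arg\min_{a\in\mathcal A}\langle\nabla f(x),a\rangle$; for $S\in\mathcal S_x$, $v_S(x)\in\arg\max_{v\in S}\langle\nabla f(x),v\rangle$; $v_f(x)$ is an element of $\{v_S(x):S\in\mathcal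 S_x\}$ minimizing $\langle\nabla f(x),\cdot\rangle$. For $x,x^*\in\mathcal D$ with $\langle\nabla f(x),x^*-x\rangle<0$, $\gamma^{A}(x,x^* ):=\frac{\langle-\nabla f(x),x^*-x\rangle}{\langle-\nabla f(x),s_f(x)-v_f(x)\rangle}$, and $\mu_f^{A}:=\inf_{x\in\mathcal D}\inf_{x^*\in\mathcal D:\langle\nabla f(x),x^*-x\rangle<0}\frac{2}{\gamma^{A}(x,x^* )^2}\big(f(x^* )-f(x)-\langle\nabla f(x),x^*-x\rangle\big)$ (an infimum over the empty set is $+\infty$). *)

(* Defs.v *)
(* classical reals.  Points of R^d are represented as
   functions nat -> R whose coordinates of index >= d vanish (predicate inRd);
   all inner products / norms only use the coordinates 0..d-1. *)
From Stdlib Require Import Reals Lra List.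
Import ListNotations.
Open Scope R_scope.

Definition vec := nat -> R.

Definition inRd (d : nat) (v : vec) : Prop := forall i, (d <= i)%nat -> v i = 0.

Definition dot (d : nat) (u v : vec) : R :=
  fold_right Rplus 0 (map (fun i => u i * v i) (seq 0 d)).
Definition norm (d : nat) (v : vec) : R := sqrt (dot d v v).

Definition vadd (u v : vec) : vec := fun i => u i + v i.
Definition vsub (u v : vec) : vec := fun i => u i - v i.
Definition vscale (c : R) (v : vec) : vec := fun i => c * v i.
Definition vopp (v : vec) : vec := fun i => - v i.

Definition csum (l : list vec) (c : vec -> R) : R := fold_right Rplus 0 (map c l).
Definition lsum (l : list vec) (c : vec -> R) : vec :=
  fun i => fold_right Rplus 0 (map (fun a => c a * a i) l).

Definition in_conv (A : list vec) (x : vec) : Prop :=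
  exists c : vec -> R, (forall a, In a A -> 0 <= c a) /\ csum A c = 1 /\
    forall i, x i = lsum A c i.

Definition proper_conv_comb (S : list vec) (x : vec) : Prop :=
  NoDup S /\ exists c : vec -> R, (forall s, In s S -> 0 < c s) /\ csum S c = 1 /\
    forall i, x i = lsum S c i.

Definition Sx (B : vec -> Prop) (x : vec) (S : list vec) : Prop :=
  (forall s, In s S -> B s) /\ proper_conv_comb S x.

Definition convex_set (C : vec -> Prop) : Prop :=
  forall x y t, C x -> C y -> 0 <= t <= 1 -> C (vadd (vscale t x) (vscale (1 - t) y)).

Definition face (C K : vec -> Prop) : Prop :=
  (forall y, K y -> C y) /\ convex_set K /\
  forall x y t, C x -> C y -> 0 < t < 1 ->
    K (vadd (vscale t x) (vscale (1 - t) y)) -> K x /\ K y.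

Definition in_cone (K : vec -> Prop) (x r : vec) : Prop :=
  exists (ks : list vec) (c : vec -> R),
    (forall k, In k ks -> K k /\ 0 <= c k) /\
    forall i, r i = fold_right Rplus 0 (map (fun k => c k * (k i - x i)) ks).

Definition nonzero (d : nat) (r : vec) : Prop := exists i, (i < d)%nat /\ r i <> 0.

Definition is_max_of (P : R -> Prop) (m : R) : Prop := P m /\ forall y, P y -> y <= m.
Definition is_min_of (P : R -> Prop) (m : R) : Prop := P m /\ forall y, P y -> m <= y.
Definition is_inf (P : R -> Prop) (m : R) : Prop :=
  (forall y, P y -> m <= y) /\ (forall m', (forall y, P y -> m' <= y) -> m' <= m).

Definition PdirW_is (d : nat) (B : vec -> Prop) (r x : vec) (w : R) : Prop :=
  is_min_of (fun t => exists S, Sx B x S /\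
     is_max_of (fun y => exists s v, B s /\ In v S /\
                  y = dot d (vscale (/ norm d r) r) (vsub s v)) t) w.

Definition PWidth_set (d : nat) (A : list vec) (t : R) : Prop :=
  exists (K : vec -> Prop) (x r : vec),
    face (in_conv A) K /\ (exists y, K y) /\ K x /\ in_cone K x r /\ nonzero d r /\
    PdirW_is d (fun b => In b A /\ K b) r x t.

(* s is a valid choice of s_f(x), given gx = grad f(x) *)
Definition is_sf (d : nat) (A : list vec) (gx s : vec) : Prop :=
  In s A /\ forall a, In a A -> dot d gx s <= dot d gx a.
Definition is_vS (d : nat) (gx : vec) (S : list vec) (v : vec) : Prop :=
  In v S /\ forall w, In w S -> dot d gx w <= dot d gx v.
Definition is_vf (d : nat) (A : list vec) (x gx v : vec) : Prop :=
  (exists S, Sx (fun b => In b A) x S /\ is_vS d gx S v) /\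
  forall S v', Sx (fun b => In b A) x S -> is_vS d gx S v' -> dot d gx v <= dot d gx v'.

Definition gammaA (d : nat) (gx x xs s v : vec) : R :=
  dot d (vopp gx) (vsub xs x) / dot d (vopp gx) (vsub s v).

(* the set whose infimum (+oo if empty) is mu_f^A *)
Definition muA_set (d : nat) (A : list vec) (f : vec -> R) (g : vec -> vec) (y : R) : Prop :=
  exists x xs s v, in_conv A x /\ in_conv A xs /\ dot d (g x) (vsub xs x) < 0 /\
    is_sf d A (g x) s /\ is_vf d A x (g x) v /\
    y = 2 / (gammaA d (g x) x xs s v) ^ 2 * (f xs - f x - dot d (g x) (vsub xs x)).

Definition open_Rd (d : nat) (U : vec -> Prop) : Prop :=
  (forall x, U x -> inRd d x) /\
  forall x, U x -> exists delta, 0 < delta /\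
    forall y, inRd d y -> norm d (vsub y x) < delta -> U y.

Definition convex_on (U : vec -> Prop) (f : vec -> R) : Prop :=
  forall x y t, U x -> U y -> 0 <= t <= 1 ->
    f (vadd (vscale t x) (vscale (1 - t) y)) <= t * f x + (1 - t) * f y.

Definition has_gradient_on (d : nat) (U : vec -> Prop) (f : vec -> R) (g : vec -> vec) : Prop :=
  forall x, U x -> forall eps, 0 < eps -> exists delta, 0 < delta /\
    forall h, inRd d h -> norm d h < delta ->
      Rabs (f (vadd x h) - f x - dot d (g x) h) <= eps * norm d h.

(* Main.v *)
Require Import Defs.
From Stdlib Require Import Reals Lra Lia List FunctionalExtensionality Classical ClassicalDescription.
Import ListNotations.
Open Scope R_scope.

Definition sm {X : Type} (l : list X) (F : X -> R) : R := fold_right Rplus 0 (map F l).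

Lemma sm_nil {X} (F : X -> R) : sm [] F = 0. Proof. reflexivity. Qed.
Lemma sm_cons {X} (a : X) l F : sm (a :: l) F = F a + sm l F. Proof. reflexivity. Qed.
Lemma sm_app {X} (l1 l2 : list X) F : sm (l1 ++ l2) F = sm l1 F + sm l2 F.
Proof. induction l1; simpl; [unfold sm; simpl; lra|]. rewrite !sm_cons, IHl1. lra. Qed.
Lemma sm_plus {X} (l : list X) F G : sm l (fun i => F i + G i) = sm l F + sm l G.
Proof. induction l; [unfold sm; simpl; lra|]. rewrite !sm_cons, IHl. lra. Qed.
Lemma sm_scal {X} (l : list X) k F : sm l (fun i => k * F i) = k * sm l F.
Proof. induction l; [unfold sm; simpl; lra|]. rewrite !sm_cons, IHl. lra. Qed.
Lemma sm_scalr {X} (l : list X) k F : sm l (fun i => F i * k) = sm l F * k.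
Proof. induction l; [unfold sm; simpl; lra|]. rewrite !sm_cons, IHl. lra. Qed.
Lemma sm_opp {X} (l : list X) F : sm l (fun i => - F i) = - sm l F.
Proof. induction l; [unfold sm; simpl; lra|]. rewrite !sm_cons, IHl. lra. Qed.
Lemma sm_minus {X} (l : list X) F G : sm l (fun i => F i - G i) = sm l F - sm l G.
Proof. induction l; [unfold sm; simpl; lra|]. rewrite !sm_cons, IHl. lra. Qed.
Lemma sm_zero {X} (l : list X) : sm l (fun _ => 0) = 0.
Proof. induction l; [reflexivity|]. rewrite sm_cons, IHl. lra. Qed.
Lemma sm_ext {X} (l : list X) F G : (forall i, In i l -> F i = G i) -> sm l F = sm l G.
Proof. induction l; intros H; [reflexivity|]. rewrite !sm_cons, IHl, (H a); simpl; auto. intros; apply H; simpl; auto. Qed.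
Lemma sm_le {X} (l : list X) F G : (forall i, In i l -> F i <= G i) -> sm l F <= sm l G.
Proof. induction l; intros H; [unfold sm; simpl; lra|]. rewrite !sm_cons.
  assert (F a <= G a) by (apply H; simpl; auto).
  assert (sm l F <= sm l G) by (apply IHl; intros; apply H; simpl; auto). lra. Qed.
Lemma sm_nonneg {X} (l : list X) F : (forall i, In i l -> 0 <= F i) -> 0 <= sm l F.
Proof. intros H. rewrite <- (sm_zero l). apply sm_le. auto. Qed.
Lemma sm_nonpos {X} (l : list X) F : (forall i, In i l -> F i <= 0) -> sm l F <= 0.
Proof. intros H. rewrite <- (sm_zero l). apply sm_le. auto. Qed.
Lemma sm_zero_nonneg {X} (l : list X) F : (forall i, In i l -> 0 <= F i) -> sm l F = 0 ->
  forall i, In i l -> F i = 0.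
Proof. induction l; intros H E i Hi; [destruct Hi|]. rewrite sm_cons in E.
  assert (0 <= F a) by (apply H; simpl; auto).
  assert (0 <= sm l F) by (apply sm_nonneg; intros; apply H; simpl; auto).
  destruct Hi as [<-|Hi]; [lra|]. apply IHl; auto. intros; apply H; simpl; auto. lra. Qed.
Lemma sm_exch {X Y} (l1 : list X) (l2 : list Y) (F : X -> Y -> R) :
  sm l1 (fun a => sm l2 (fun b => F a b)) = sm l2 (fun b => sm l1 (fun a => F a b)).
Proof. induction l1; simpl.
  - rewrite sm_nil. symmetry. apply sm_zero.
  - rewrite sm_cons, IHl1, <- sm_plus. reflexivity. Qed.

Lemma csum_sm l c : csum l c = sm l c. Proof. reflexivity. Qed.
Lemma lsum_sm l c i : lsum l c i = sm l (fun a => c a * a i). Proof. reflexivity. Qed.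
Lemma dot_sm d u v : dot d u v = sm (seq 0 d) (fun i => u i * v i). Proof. reflexivity. Qed.

Section DotL.
Variable d : nat.
Lemma dot_comm u v : dot d u v = dot d v u.
Proof. rewrite !dot_sm. apply sm_ext. intros; ring. Qed.
Lemma dot_addr u v w : dot d u (fun i => v i + w i) = dot d u v + dot d u w.
Proof. rewrite !dot_sm, <- sm_plus. apply sm_ext; intros; ring. Qed.
Lemma dot_subr u v w : dot d u (fun i => v i - w i) = dot d u v - dot d u w.
Proof. rewrite !dot_sm, <- sm_minus. apply sm_ext; intros; ring. Qed.
Lemma dot_scalr u k v : dot d u (fun i => k * v i) = k * dot d u v.
Proof. rewrite !dot_sm, <- sm_scal. apply sm_ext; intros; ring. Qed.
Lemma dot_oppr u v : dot d u (fun i => - v i) = - dot d u v.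
Proof. rewrite !dot_sm, <- sm_opp. apply sm_ext; intros; ring. Qed.
Lemma dot_addl u v w : dot d (fun i => v i + w i) u = dot d v u + dot d w u.
Proof. rewrite dot_comm, dot_addr, !(dot_comm u). reflexivity. Qed.
Lemma dot_subl u v w : dot d (fun i => v i - w i) u = dot d v u - dot d w u.
Proof. rewrite dot_comm, dot_subr, !(dot_comm u). reflexivity. Qed.
Lemma dot_scall u k v : dot d (fun i => k * v i) u = k * dot d v u.
Proof. rewrite dot_comm, dot_scalr, !(dot_comm u). reflexivity. Qed.
Lemma dot_oppl u v : dot d (fun i => - v i) u = - dot d v u.
Proof. rewrite dot_comm, dot_oppr, !(dot_comm u). reflexivity. Qed.
Lemma dot_zeror u : dot d u (fun _ => 0) = 0.
Proof. rewrite dot_sm. transitivity (sm (seq 0 d) (fun _ => 0)); [|apply sm_zero]. apply sm_ext; intros; ring. Qed.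
Lemma dot_zerol u : dot d (fun _ => 0) u = 0.
Proof. rewrite dot_comm. apply dot_zeror. Qed.
Lemma dot_ext u u' v v' : (forall i, u i = u' i) -> (forall i, v i = v' i) -> dot d u v = dot d u' v'.
Proof. intros H1 H2. rewrite !dot_sm. apply sm_ext. intros; rewrite H1, H2; auto. Qed.
Lemma dot_pos u : 0 <= dot d u u.
Proof. rewrite dot_sm. apply sm_nonneg. intros. nra. Qed.
Lemma dot_null u : dot d u u = 0 -> forall v, dot d u v = 0.
Proof. intros H v. rewrite dot_sm in *.
  assert (Hz := sm_zero_nonneg _ _ (fun i _ => Rle_0_sqr (u i)) H).
  transitivity (sm (seq 0 d) (fun _ => 0)); [|apply sm_zero]. apply sm_ext. intros i Hi.
  specialize (Hz i Hi). unfold Rsqr in Hz. assert (u i = 0) by nra. rewrite H0; ring. Qed.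
Lemma dot_sum_r {X} (l : list X) u (F : X -> vec) :
  dot d u (fun i => sm l (fun a => F a i)) = sm l (fun a => dot d u (F a)).
Proof. rewrite dot_sm. unfold dot.
  transitivity (sm (seq 0 d) (fun i => sm l (fun a => u i * F a i))).
  - apply sm_ext. intros. rewrite <- sm_scal. reflexivity.
  - rewrite sm_exch. reflexivity. Qed.
Lemma CS u v : dot d u v <= sqrt (dot d u u) * sqrt (dot d v v).
Proof.
  rewrite <- sqrt_mult by apply dot_pos.
  destruct (Req_dec (dot d v v) 0) as [Hv|Hv].
  - rewrite dot_comm, (dot_null v Hv). rewrite Hv, Rmult_0_r, sqrt_0. lra.
  - assert (Hp : 0 < dot d v v) by (pose proof (dot_pos v); lra).
    set (t := dot d u v / dot d v v).
    assert (H := dot_pos (fun i => u i - t * v i)).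
    rewrite dot_subl, !dot_subr, !dot_scall, !dot_scalr in H.
    rewrite (dot_comm v u) in H.
    assert (H2 : (dot d u v)^2 <= dot d u u * dot d v v).
    { unfold t in H. field_simplify in H; [|lra].
      assert (0 <= (dot d u u * dot d v v - dot d u v ^ 2) / dot d v v) by (field_simplify; lra).
      apply Rmult_le_compat_r with (r := dot d v v) in H0; [|lra].
      field_simplify in H0; lra. }
    destruct (Rle_dec (dot d u v) 0).
    + pose proof (sqrt_pos (dot d u u * dot d v v)). lra.
    + rewrite <- (sqrt_pow2 (dot d u v)) by lra. apply sqrt_le_1_alt. lra.
Qed.
End DotL.


Fixpoint lcI (T : list vec) (cs : nat -> R) : vec :=
  match T with [] => fun _ => 0 | u :: L => fun i => cs 0%nat * u i + lcI L (fun j => cs (S j)) i end.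
Fixpoint lcR (T : list vec) (cs : nat -> R) (h : vec -> R) : R :=
  match T with [] => 0 | u :: L => cs 0%nat * h u + lcR L (fun j => cs (S j)) h end.

Lemma lcI_ext T cs cs' i : (forall j, (j < length T)%nat -> cs j = cs' j) -> lcI T cs i = lcI T cs' i.
Proof. revert cs cs'; induction T; intros cs cs' H; simpl; auto.
  rewrite (H 0%nat) by (simpl; lia). f_equal. apply IHT. intros; apply H; simpl; lia. Qed.
Lemma lcI_lin T cs1 cs2 k i : lcI T (fun j => cs1 j + k * cs2 j) i = lcI T cs1 i + k * lcI T cs2 i.
Proof. revert cs1 cs2; induction T; intros; simpl; [ring|]. rewrite IHT. ring. Qed.
Lemma lcI_scal T cs k i : lcI T (fun j => k * cs j) i = k * lcI T cs i.
Proof. revert cs; induction T; intros; simpl; [ring|]. rewrite IHT. ring. Qed.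
Lemma lcR_ext T cs cs' h : (forall j, (j < length T)%nat -> cs j = cs' j) -> lcR T cs h = lcR T cs' h.
Proof. revert cs cs'; induction T; intros cs cs' H; simpl; auto.
  rewrite (H 0%nat) by (simpl; lia). f_equal. apply IHT. intros; apply H; simpl; lia. Qed.
Lemma lcR_zero T cs h : (forall u, In u T -> h u = 0) -> lcR T cs h = 0.
Proof. revert cs; induction T; intros cs H; simpl; auto. rewrite H, IHT; simpl; auto. ring.
  intros; apply H; simpl; auto. Qed.
Lemma lcR_le T cs h h' : (forall j, (j < length T)%nat -> 0 <= cs j) ->
  (forall u, In u T -> h u <= h' u) -> lcR T cs h <= lcR T cs h'.
Proof. revert cs; induction T; intros cs H1 H2; simpl; [lra|].
  assert (0 <= cs 0%nat) by (apply H1; simpl; lia).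
  assert (h a <= h' a) by (apply H2; simpl; auto).
  assert (lcR T (fun j => cs (S j)) h <= lcR T (fun j => cs (S j)) h').
  { apply IHT; [intros; apply H1; simpl; lia|intros; apply H2; simpl; auto]. }
  nra. Qed.
Lemma lcR_lin T cs h h' k : lcR T cs (fun u => h u + k * h' u) = lcR T cs h + k * lcR T cs h'.
Proof. revert cs; induction T; intros; simpl; [ring|]. rewrite IHT. ring. Qed.
Lemma lcR_const T cs k : lcR T cs (fun _ => k) = lcR T cs (fun _ => 1) * k.
Proof. revert cs; induction T; intros; simpl; [ring|]. rewrite IHT. ring. Qed.

Section Proj.
Variable d : nat.
Lemma dot_lcI r T cs : dot d r (lcI T cs) = lcR T cs (dot d r).
Proof. revert cs; induction T; intros; simpl. apply dot_zeror.
  rewrite dot_addr, dot_scalr, IHT. reflexivity. Qed.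

Definition nsq (v : vec) := dot d v v.

Fixpoint proj (T : list vec) (b : vec) : vec :=
  match T with
  | [] => fun _ => 0
  | u :: L => let pb := proj L b in let w := fun i => u i - proj L u i in
     let nw := dot d w w in
     if Req_EM_T nw 0 then pb else fun i => pb i + (dot d (fun j => b j - pb j) w / nw) * w i
  end.

Lemma proj_span T b : exists cs, forall i, proj T b i = lcI T cs i.
Proof. revert b; induction T as [|u L IH]; intros b.
  - exists (fun _ => 0). intros; reflexivity.
  - destruct (IH b) as [cb Hb]. destruct (IH u) as [cu Hu]. simpl.
    destruct (Req_EM_T _ 0).
    + exists (fun j => match j with 0%nat => 0 | S j => cb j end). intros; simpl. rewrite Hb, Rmult_0_l, Rplus_0_l. reflexivity.
    + set (al := dot d (fun j => b j - proj L b j) (fun i => u i - proj L u i) /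
                 dot d (fun i => u i - proj L u i) (fun i => u i - proj L u i)).
      exists (fun j => match j with 0%nat => al | S j => cb j + (- al) * cu j end).
      intros; simpl. rewrite lcI_lin, Hb, Hu. fold al. ring.
Qed.

Lemma proj_orth T b u' : In u' T -> dot d (fun i => b i - proj T b i) u' = 0.
Proof. revert b u'; induction T as [|u L IH]; intros b u' Hin; [destruct Hin|].
  destruct (proj_span L u) as [cu Hu].
  simpl. destruct (Req_EM_T _ 0) as [E|E].
  - destruct Hin as [<-|Hin]; [|apply IH; auto].
    rewrite (dot_ext d _ _ u (fun i => (u i - proj L u i) + lcI L cu i)) by
      (intros; try reflexivity; rewrite Hu; ring).
    rewrite dot_addr, dot_comm, (dot_null _ _ E), dot_lcI, lcR_zero. ring.
    intros; apply IH; auto.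
  - set (nw := dot d (fun i => u i - proj L u i) (fun i => u i - proj L u i)) in *.
    set (al := dot d (fun j => b j - proj L b j) (fun i => u i - proj L u i) / nw).
    assert (HL : forall u', In u' L ->
       dot d (fun i => b i - (proj L b i + al * (u i - proj L u i))) u' = 0).
    { intros u0 H0.
      rewrite (dot_ext d _ (fun i => (b i - proj L b i) + (-al) * (u i - proj L u i)) _ u0) by (intros; ring).
      rewrite dot_addl, dot_scall, IH, (IH u) by auto. ring. }
    destruct Hin as [<-|Hin]; [|apply HL; auto].
    rewrite (dot_ext d _ _ u (fun i => (u i - proj L u i) + lcI L cu i)) by
      (intros; try reflexivity; rewrite Hu; ring).
    rewrite dot_addr, dot_lcI, lcR_zero by auto.
    rewrite (dot_ext d _ (fun i => (b i - proj L b i) + (-al) * (u i - proj L u i)) _ (fun i => u i - proj L u i)) by (intros; ring).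
    rewrite dot_addl, dot_scall. fold nw. unfold al. field. auto.
Qed.

Lemma proj_min T b cs : nsq (fun i => b i - proj T b i) <= nsq (fun i => b i - lcI T cs i).
Proof. destruct (proj_span T b) as [cp Hp]. unfold nsq.
  set (r := fun i => b i - proj T b i).
  assert (Hr : dot d r (lcI T (fun j => cp j + (-1) * cs j)) = 0).
  { rewrite dot_lcI. apply lcR_zero. intros; apply proj_orth; auto. }
  rewrite (dot_ext d (fun i => b i - lcI T cs i) (fun i => r i + lcI T (fun j => cp j + (-1) * cs j) i) (fun i => b i - lcI T cs i)
    (fun i => r i + lcI T (fun j => cp j + (-1) * cs j) i)) by (intros; unfold r; rewrite lcI_lin, Hp; ring).
  rewrite dot_addl, !dot_addr, Hr. rewrite (dot_comm d (lcI _ _) r), Hr.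
  pose proof (dot_pos d (lcI T (fun j => cp j + -1 * cs j))). lra.
Qed.
End Proj.


Lemma argmin {X : Type} (L : list X) (P : X -> Prop) (h : X -> R) :
  (exists j, In j L /\ P j) -> exists j0, In j0 L /\ P j0 /\ forall j, In j L -> P j -> h j0 <= h j.
Proof. induction L as [|a L IH]; intros [j [Hj HP]]; [destruct Hj|].
  destruct (classic (exists j, In j L /\ P j)) as [Hex|Hno].
  - destruct (IH Hex) as [j1 [H1 [H2 H3]]].
    destruct (classic (P a /\ h a < h j1)) as [[Pa Ha]|Hn].
    + exists a. split; [simpl; auto|split; auto]. intros j' [<-|Hj'] HPj'; [lra|].
      specialize (H3 j' Hj' HPj'). lra.
    + exists j1. split; [simpl; auto|split; auto]. intros j' [<-|Hj'] HPj'; [|auto].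
      apply Rnot_lt_le. intro. apply Hn. auto.
  - assert (Pa : P a). { destruct Hj as [<-|Hj]; auto. exfalso; apply Hno; eauto. }
    exists a. split; [simpl; auto|split; auto]. intros j' [<-|Hj'] HPj'; [lra|].
    exfalso; apply Hno; eauto.
Qed.

Fixpoint rm (j : nat) (T : list vec) {struct T} : list vec :=
  match T with [] => [] | u :: L => match j with 0%nat => L | S j' => u :: rm j' L end end.
Definition shf (j : nat) (cs : nat -> R) : nat -> R := fun k => if Nat.ltb k j then cs k else cs (S k).

Lemma rm_lcI T : forall j cs i, (j < length T)%nat -> cs j = 0 -> lcI (rm j T) (shf j cs) i = lcI T cs i.
Proof. induction T as [|u L IH]; intros j cs i Hj Hc; simpl in Hj; [lia|].
  destruct j as [|j'].
  - simpl. rewrite Hc, Rmult_0_l, Rplus_0_l. apply lcI_ext. intros; unfold shf; simpl. reflexivity.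
  - simpl. unfold shf at 1. simpl. f_equal.
    rewrite <- (IH j' (fun k => cs (S k))) by (auto; lia).
    apply lcI_ext. intros k _. unfold shf. simpl. reflexivity.
Qed.
Lemma rm_length T : forall j, (j < length T)%nat -> length (rm j T) = pred (length T).
Proof. induction T; intros j Hj; simpl in *; [lia|]. destruct j; simpl; auto.
  rewrite IHT by lia. destruct T; simpl in *; lia. Qed.
Lemma rm_in T : forall j u, In u (rm j T) -> In u T.
Proof. induction T as [|a L IH]; intros j u H; [simpl in H; destruct H|].
  destruct j as [|j]; simpl in H. right; auto.
  destruct H as [H|H]; [left; auto|right; eapply IH; eauto]. Qed.

Section Crux.
Variable d : nat.
Variable b : vec.
Variable Gs : list vec.

Definition inC (z : vec) : Prop := exists T cs, (forall u, In u T -> In u Gs) /\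
  (forall j, (j < length T)%nat -> 0 <= cs j) /\ forall i, z i = lcI T cs i.

Lemma nsq_convex X Y s : 0 <= s <= 1 ->
  nsq d (fun i => (1 - s) * X i + s * Y i) <= (1 - s) * nsq d X + s * nsq d Y.
Proof. intros Hs. unfold nsq.
  rewrite dot_addl, !dot_addr, !dot_scall, !dot_scalr.
  assert (H := dot_pos d (fun i => X i - Y i)).
  rewrite dot_subl, !dot_subr in H. rewrite (dot_comm d Y X) in *.
  assert (0 <= s * (1 - s)) by nra. nra.
Qed.

Lemma crux n : forall T cs, length T = n -> (forall u, In u T -> In u Gs) ->
  (forall j, (j < n)%nat -> 0 <= cs j) ->
  exists T', (forall u, In u T' -> In u Gs) /\ inC (proj d T' b) /\
    nsq d (fun i => b i - proj d T' b i) <= nsq d (fun i => b i - lcI T cs i).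
Proof.
  induction n as [|n IH]; intros T cs HT HG Hc;
  destruct (proj_span d T b) as [de Hde];
  (destruct (classic (forall j, (j < length T)%nat -> 0 <= de j)) as [Hgood|Hbad];
   [exists T; split; auto; split; [exists T, de; auto|apply proj_min]|]).
  - exfalso; apply Hbad; intros; lia.
  - assert (Hex : exists j, In j (seq 0 (S n)) /\ de j < 0).
    { apply not_all_ex_not in Hbad. destruct Hbad as [j Hj].
      exists j. apply imply_to_and in Hj. destruct Hj as [Hj1 Hj2].
      split; [apply in_seq; lia| lra]. }
    destruct (argmin _ _ (fun j => cs j / (cs j - de j)) Hex) as [j0 [Hj0 [Hd0 Hmin]]].
    apply in_seq in Hj0.
    set (s := cs j0 / (cs j0 - de j0)).
    assert (Hc0 : 0 <= cs j0) by (apply Hc; lia).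
    assert (Hs : 0 <= s <= 1).
    { unfold s. split. apply Rle_mult_inv_pos; lra.
      apply Rmult_le_reg_r with (cs j0 - de j0); [lra|]. field_simplify; lra. }
    set (la := fun j => cs j + s * (de j - cs j)).
    assert (Hla : forall j, (j < S n)%nat -> 0 <= la j).
    { intros j Hj. unfold la. destruct (Rlt_dec (de j) 0) as [Hn|Hn].
      - assert (s <= cs j / (cs j - de j)) by (apply Hmin; auto; apply in_seq; lia).
        assert (0 <= cs j) by (apply Hc; lia).
        apply Rmult_le_compat_r with (r := cs j - de j) in H; [|lra].
        unfold Rdiv in H. rewrite Rmult_assoc, Rinv_l in H by lra. nra.
      - assert (0 <= cs j) by (apply Hc; lia). nra. }
    assert (Hla0 : la j0 = 0). { unfold la, s. field. lra. }
    assert (Hlen : (j0 < length T)%nat) by lia.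
    destruct (IH (rm j0 T) (shf j0 la)) as [T' [HT'1 [HT'2 HT'3]]].
    + rewrite rm_length; lia.
    + intros u Hu; apply HG; eapply rm_in; eauto.
    + intros k Hk. unfold shf. destruct (Nat.ltb k j0); apply Hla; lia.
    + exists T'. split; auto. split; auto. eapply Rle_trans; [apply HT'3|].
      assert (E : forall i, b i - lcI (rm j0 T) (shf j0 la) i =
                    (1 - s) * (b i - lcI T cs i) + s * (b i - proj d T b i)).
      { intros i. rewrite rm_lcI by auto. unfold la.
        rewrite (lcI_ext T _ (fun j => cs j + s * (de j + (-1) * cs j))) by (intros; ring).
        rewrite lcI_lin, lcI_lin, Hde. ring. }
      unfold nsq at 1. rewrite (dot_ext d _ _ _ _ E E). fold (nsq d (fun i => (1 - s) * (b i - lcI T cs i) + s * (b i - proj d T b i))).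
      eapply Rle_trans; [apply nsq_convex; auto|].
      assert (Hm := proj_min d T b cs). nra.
Qed.
End Crux.


Fixpoint subs (l : list vec) : list (list vec) :=
  match l with [] => [[]] | a :: l => map (cons a) (subs l) ++ subs l end.
Lemma filter_subs f l : In (filter f l) (subs l).
Proof. induction l; simpl; auto. destruct (f a); apply in_or_app; [left; apply in_map|right]; auto. Qed.
Definition memb (T : list vec) (u : vec) : bool :=
  if excluded_middle_informative (In u T) then true else false.
Lemma memb_filter T Gs u : In u (filter (memb T) Gs) <-> In u Gs /\ In u T.
Proof. rewrite filter_In. unfold memb. destruct (excluded_middle_informative (In u T)); intuition; discriminate. Qed.

Lemma lcI_zero T i : lcI T (fun _ => 0) i = 0.
Proof. rewrite (lcI_ext T _ (fun j => 0 * (fun _ => 0) j)) by (intros; ring).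
  rewrite lcI_scal. ring. Qed.

Lemma in_lcI T u : In u T -> exists e, forall i, u i = lcI T e i.
Proof. induction T as [|a L IH]; intros H; [destruct H|]. destruct H as [<-|H].
  - exists (fun j => match j with 0%nat => 1 | _ => 0 end). intros i; simpl.
    rewrite lcI_zero. ring.
  - destruct (IH H) as [e He]. exists (fun j => match j with 0%nat => 0 | S j => e j end).
    intros i; simpl. rewrite He. ring_simplify. apply lcI_ext. auto. Qed.

Lemma span_incl T' T : (forall u, In u T' -> In u T) -> forall cs', exists cs, forall i, lcI T' cs' i = lcI T cs i.
Proof. induction T' as [|u L IH]; intros H cs'.
  - exists (fun _ => 0). intros; simpl. rewrite lcI_zero. auto.
  - destruct (in_lcI T u) as [e He]; [apply H; simpl; auto|].
    destruct (IH (fun v Hv => H v (or_intror Hv)) (fun j => cs' (S j))) as [cr Hcr].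
    exists (fun j => cr j + cs' 0%nat * e j). intros i. simpl. rewrite lcI_lin, He, Hcr. ring. Qed.

Section GMin.
Variable d : nat.
Variable b : vec.
Variable Gs : list vec.

Definition val T := nsq d (fun i => b i - proj d T b i).

Lemma val_le T T' : (forall u, In u T' -> In u T) -> val T <= val T'.
Proof. intros H. destruct (proj_span d T' b) as [c' Hc']. destruct (span_incl T' T H c') as [c Hc].
  unfold val. eapply Rle_trans; [apply (proj_min d T b c)|]. right. unfold nsq.
  apply dot_ext; intros i; rewrite Hc', Hc; auto. Qed.

Lemma gmin : exists p, inC Gs p /\ forall z, inC Gs z -> nsq d (fun i => b i - p i) <= nsq d (fun i => b i - z i).
Proof.
  set (Good := fun T' => exists p, inC Gs p /\ nsq d (fun i => b i - p i) = val T').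
  assert (Hne : exists j, In j (subs Gs) /\ Good j).
  { exists []. split. replace (@nil vec) with (filter (fun _ => false) Gs) by (induction Gs; auto).
    apply filter_subs.
    exists (proj d [] b). split. exists [], (fun _ => 0). split; [intros u []|]. split; [simpl; intros; lia|].
    intros; reflexivity. reflexivity. }
  destruct (argmin _ Good val Hne) as [Ts [_ [[ps [Hps1 Hps2]] Hmin]]].
  exists ps. split; auto. intros z [T [cs [HT [Hcs Hz]]]].
  destruct (crux d b Gs (length T) T cs eq_refl HT Hcs) as [T' [HT'1 [HT'2 HT'3]]].
  set (T'' := filter (memb T') Gs).
  assert (E1 : val T' <= val T'') by (apply val_le; intros u Hu; apply memb_filter in Hu; tauto).
  assert (E2 : val T'' <= val T') by (apply val_le; intros u Hu; apply memb_filter; auto).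
  assert (E3 : val Ts <= val T'').
  { apply Hmin. apply filter_subs. exists (proj d T' b). split; auto. fold (val T'). lra. }
  rewrite Hps2. eapply Rle_trans; [apply E3|]. eapply Rle_trans; [apply E2|].
  eapply Rle_trans; [apply HT'3|]. right. unfold nsq. apply dot_ext; intros; rewrite Hz; auto.
Qed.

Lemma nsq_lin X u t : nsq d (fun i => X i - t * u i) = nsq d X - 2 * t * dot d X u + t^2 * nsq d u.
Proof. unfold nsq. rewrite dot_subl, !dot_subr, !dot_scall, !dot_scalr, (dot_comm d u X). ring. Qed.

Lemma kkt p : inC Gs p -> (forall z, inC Gs z -> nsq d (fun i => b i - p i) <= nsq d (fun i => b i - z i)) ->
  (forall u, In u Gs -> dot d (fun i => b i - p i) u <= 0) /\ dot d (fun i => b i - p i) p = 0.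
Proof.
  intros [T [cs [HT [Hcs Hp]]]] Hmin. split.
  - intros u Hu. apply Rnot_lt_le. intros Hk.
    set (k := dot d (fun i => b i - p i) u) in *.
    destruct (Req_dec (nsq d u) 0) as [Hb|Hb].
    { unfold k in Hk. rewrite dot_comm, (dot_null d u Hb) in Hk. lra. }
    assert (Hbp : 0 < nsq d u) by (pose proof (dot_pos d u); unfold nsq in *; lra).
    set (t := k / nsq d u).
    assert (Hin : inC Gs (fun i => p i + t * u i)).
    { exists (u :: T), (fun j => match j with 0%nat => t | S j => cs j end). split.
      intros v [<-|Hv]; auto. split. intros [|j] Hj; [unfold t; apply Rle_mult_inv_pos; lra|apply Hcs; simpl in Hj; lia].
      intros i; simpl. rewrite Hp, Rplus_comm. f_equal. }
    specialize (Hmin _ Hin).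
    assert (E : nsq d (fun i => b i - (p i + t * u i)) = nsq d (fun i => (b i - p i) - t * u i))
      by (unfold nsq; apply dot_ext; intros; ring).
    cbv beta in Hmin. rewrite E, nsq_lin in Hmin. fold k in Hmin.
    assert (E2 : - 2 * t * k + t ^ 2 * nsq d u = - (k^2 / nsq d u)) by (unfold t; field; lra).
    assert (0 < k^2) by nra.
    assert (0 < k^2 / nsq d u) by (apply Rdiv_lt_0_compat; lra).
    lra.
  - set (k := dot d (fun i => b i - p i) p).
    destruct (Req_dec (nsq d p) 0) as [Hb|Hb].
    { unfold k. rewrite dot_comm, (dot_null d p Hb). auto. }
    assert (Hbp : 0 < nsq d p) by (pose proof (dot_pos d p); unfold nsq in *; lra).
    destruct (Req_dec k 0) as [|Hk]; auto. exfalso.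
    set (s := k / (nsq d p + Rabs k)).
    assert (Hpos : 0 < nsq d p + Rabs k) by (pose proof (Rabs_pos k); lra).
    assert (Hs : -1 <= s <= 1).
    { unfold s. split; [apply Rmult_le_reg_r with (nsq d p + Rabs k); [lra|]|
        apply Rmult_le_reg_r with (nsq d p + Rabs k); [lra|]];
      field_simplify; try lra; unfold Rabs; destruct (Rcase_abs k); lra. }
    assert (Hin : inC Gs (fun i => p i + s * p i)).
    { exists T, (fun j => (1 + s) * cs j). split; auto. split.
      intros j Hj. specialize (Hcs j Hj). nra.
      intros i. rewrite lcI_scal, <- Hp. ring. }
    specialize (Hmin _ Hin).
    assert (E : nsq d (fun i => b i - (p i + s * p i)) = nsq d (fun i => (b i - p i) - s * p i))
      by (unfold nsq; apply dot_ext; intros; ring).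
    cbv beta in Hmin. rewrite E, nsq_lin in Hmin. fold k in Hmin.
    assert (H2 : 0 <= - 2 * s * k + s ^ 2 * nsq d p) by lra.
    unfold s in H2.
    assert (Hk2 : 0 < k^2) by (destruct (Rlt_dec k 0); [nra|]; assert (0 < k) by lra; nra).
    replace (- 2 * (k / (nsq d p + Rabs k)) * k + (k / (nsq d p + Rabs k)) ^ 2 * nsq d p) with
      (k^2 * (- nsq d p - 2 * Rabs k) / (nsq d p + Rabs k)^2) in H2 by (field; lra).
    assert (0 < k ^ 2 * (nsq d p + 2 * Rabs k) / (nsq d p + Rabs k) ^ 2).
    { apply Rdiv_lt_0_compat; [|apply pow_lt; lra]. pose proof (Rabs_pos k). nra. }
    unfold Rdiv in *. nra.
Qed.
End GMin.


Lemma sm_ge_elem {X} (l : list X) F a : In a l -> (forall i, In i l -> 0 <= F i) -> F a <= sm l F.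
Proof. induction l as [|b l IH]; intros Ha H; [destruct Ha|]. rewrite sm_cons.
  destruct Ha as [<-|Ha].
  - assert (0 <= sm l F) by (apply sm_nonneg; intros; apply H; simpl; auto). lra.
  - assert (F a <= sm l F) by (apply IH; auto; intros; apply H; simpl; auto).
    assert (0 <= F b) by (apply H; simpl; auto). lra. Qed.

Section Conv.
Variable d : nat.
Variable A : list vec.

Lemma in_conv_pt a : In a A -> in_conv A a.
Proof. intros Ha.
  set (ind := fun b : vec => if excluded_middle_informative (b = a) then 1 else 0).
  set (n := sm A ind).
  assert (Hn : 1 <= n). { unfold n. replace 1 with (ind a) by (unfold ind; destruct (excluded_middle_informative (a = a)); congruence).
    apply sm_ge_elem; auto. intros; unfold ind; destruct (excluded_middle_informative _); lra. }
  exists (fun b => ind b / n). split; [|split].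
  - intros b _. unfold ind; destruct (excluded_middle_informative _); apply Rle_mult_inv_pos; lra.
  - rewrite csum_sm. unfold Rdiv. rewrite sm_scalr. fold n. field. lra.
  - intros i. rewrite lsum_sm. transitivity (sm A (fun b => ind b * (/ n * a i))).
    + rewrite sm_scalr. fold n. field. lra.
    + apply sm_ext. intros b _. unfold ind. destruct (excluded_middle_informative (b = a)) as [->|]; field; lra.
Qed.

Lemma dot_lsum (L : list vec) c w : dot d w (lsum L c) = sm L (fun a => c a * dot d w a).
Proof. rewrite (dot_ext d w w (lsum L c) (fun i => sm L (fun a => c a * a i))) by (intros; auto).
  rewrite (dot_sum_r d L w (fun a i => c a * a i)).
  apply sm_ext. intros. apply dot_scalr. Qed.

Lemma conv_bound_le z w M : in_conv A z -> (forall a, In a A -> dot d w a <= M) -> dot d w z <= M.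
Proof. intros [c [Hc [Hs Hz]]] H. rewrite (dot_ext d w w z (lsum A c)) by auto.
  rewrite dot_lsum. rewrite csum_sm in Hs. replace M with (sm A (fun a => c a * M)) by (rewrite sm_scalr, Hs; ring).
  apply sm_le. intros a Ha. specialize (Hc a Ha). specialize (H a Ha). nra. Qed.
Lemma conv_bound_ge z w M : in_conv A z -> (forall a, In a A -> M <= dot d w a) -> M <= dot d w z.
Proof. intros [c [Hc [Hs Hz]]] H. rewrite (dot_ext d w w z (lsum A c)) by auto.
  rewrite dot_lsum. rewrite csum_sm in Hs. replace M with (sm A (fun a => c a * M)) by (rewrite sm_scalr, Hs; ring).
  apply sm_le. intros a Ha. specialize (Hc a Ha). specialize (H a Ha). nra. Qed.

Lemma conv_comb x1 x2 t : in_conv A x1 -> in_conv A x2 -> 0 <= t <= 1 ->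
  in_conv A (vadd (vscale t x1) (vscale (1 - t) x2)).
Proof. intros [c1 [H11 [H12 H13]]] [c2 [H21 [H22 H23]]] Ht.
  exists (fun a => t * c1 a + (1 - t) * c2 a). split; [|split].
  - intros a Ha. specialize (H11 a Ha); specialize (H21 a Ha). nra.
  - rewrite csum_sm in *. rewrite sm_plus, !sm_scal, H12, H22. ring.
  - intros i. unfold vadd, vscale. rewrite H13, H23, !lsum_sm.
    rewrite <- !sm_scal, <- sm_plus. apply sm_ext; intros; ring.
Qed.

Variable x : vec.
Definition Gs := map (fun a => vsub a x) A.



Lemma cone_pt T : forall cs, (forall u, In u T -> In u Gs) -> (forall j, (j < length T)%nat -> 0 <= cs j) ->
  exists c, (forall a, In a A -> 0 <= c a) /\
  csum A c = lcR T cs (fun _ => 1) /\ forall i, lsum A c i = lcI T cs i + lcR T cs (fun _ => 1) * x i.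
Proof. induction T as [|u L IH]; intros cs HT Hcs.
  - exists (fun _ => 0). split; [intros; lra|]. split.
    + rewrite csum_sm. apply sm_zero.
    + intros i. rewrite lsum_sm. simpl. transitivity (sm A (fun _ => 0)); [apply sm_ext; intros; ring|]. rewrite sm_zero. ring.
  - destruct (IH (fun j => cs (S j))) as [cr [Hr1 [Hr2 Hr3]]].
    { intros; apply HT; simpl; auto. } { intros; apply Hcs; simpl; lia. }
    assert (Hu : In u Gs) by (apply HT; simpl; auto). unfold Gs in Hu. apply in_map_iff in Hu.
    destruct Hu as [a [Hau Ha]].
    destruct (in_conv_pt a Ha) as [ca [Ha1 [Ha2 Ha3]]].
    assert (H0 : 0 <= cs 0%nat) by (apply Hcs; simpl; lia).
    exists (fun b => cs 0%nat * ca b + cr b). split; [|split].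
    + intros b Hb. specialize (Ha1 b Hb); specialize (Hr1 b Hb). nra.
    + rewrite csum_sm in *. rewrite sm_plus, sm_scal, Ha2, Hr2. simpl. ring.
    + intros i. rewrite lsum_sm. transitivity (cs 0%nat * lsum A ca i + lsum A cr i).
      * rewrite !lsum_sm, <- sm_scal, <- sm_plus. apply sm_ext; intros; ring.
      * rewrite <- Ha3, Hr3. simpl. rewrite <- Hau. unfold vsub. ring.
Qed.

Lemma lcI_null T : forall cs, (forall j, (j < length T)%nat -> 0 <= cs j) -> lcR T cs (fun _ => 1) = 0 ->
  forall i, lcI T cs i = 0.
Proof. induction T as [|u L IH]; intros cs Hcs H i; simpl; auto.
  simpl in H. assert (0 <= cs 0%nat) by (apply Hcs; simpl; lia).
  assert (0 <= lcR L (fun j => cs (S j)) (fun _ => 1)).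
  { replace 0 with (lcR L (fun j => cs (S j)) (fun _ => 0)) by (apply lcR_zero; auto).
    apply lcR_le; [intros; apply Hcs; simpl; lia|intros; lra]. }
  assert (cs 0%nat = 0) by lra. rewrite H2, IH; [ring| |lra]. intros; apply Hcs; simpl; lia. Qed.

End Conv.


Lemma dot_vanish d u v : (forall i, (i < d)%nat -> u i = 0) -> dot d u v = 0.
Proof. intros H. rewrite dot_sm. transitivity (sm (seq 0 d) (fun _ => 0)); [|apply sm_zero].
  apply sm_ext. intros i Hi. apply in_seq in Hi. rewrite H by lia. ring. Qed.

Lemma pcc_nonempty S x : proper_conv_comb S x -> exists w, In w S.
Proof. intros [_ [c [_ [Hs _]]]]. destruct S as [|w S]. rewrite csum_sm, sm_nil in Hs. lra.
  exists w; simpl; auto. Qed.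

Lemma maxS d (A : list vec) (B : vec -> Prop) r x S : (forall s, B s -> In s A) -> Sx B x S ->
  exists m, is_max_of (fun y => exists s v, B s /\ In v S /\ y = dot d (vscale (/ norm d r) r) (vsub s v)) m.
Proof. intros HBA [HSB HS].
  destruct (pcc_nonempty S x HS) as [w Hw].
  set (H := fun pr : vec * vec => dot d (vscale (/ norm d r) r) (vsub (fst pr) (snd pr))).
  destruct (argmin (list_prod A S) (fun pr => B (fst pr)) (fun pr => - H pr)) as [pr [Hpr1 [Hpr2 Hpr3]]].
  { exists (w, w). split; [apply in_prod; auto|simpl; auto]. }
  exists (H pr). split.
  - destruct pr as [p1 p2]. exists p1, p2. apply in_prod_iff in Hpr1. destruct Hpr1. auto.
  - intros y [s [v [Hs [Hv ->]]]]. specialize (Hpr3 (s, v)). simpl in Hpr3.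
    assert (- H pr <= - H (s, v)) by (apply Hpr3; auto; apply in_prod; auto).
    unfold H in *; simpl in *. lra.
Qed.

Lemma width_nonneg d A t : PWidth_set d A t -> 0 <= t.
Proof. intros [K [x [r [_ [_ [_ [_ [_ [[S [[HSB HS] Hmax]] _]]]]]]]]].
  destruct (pcc_nonempty S x HS) as [w Hw].
  destruct Hmax as [_ Hmax].
  assert (E : dot d (vscale (/ norm d r) r) (vsub w w) = 0).
  { rewrite dot_comm. apply dot_vanish. intros; unfold vsub; ring. }
  rewrite <- E. apply Hmax. exists w, w. split; auto.
Qed.


Theorem mainTheorem8 (d : nat) (A : list vec) (f : vec -> R) (g : vec -> vec) (mu : R)
  (hA : A <> nil) (hAd : forall a, In a A -> inRd d a)
  (U : vec -> Prop) (hUo : open_Rd d U) (hUc : convex_set U)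
  (hDU : forall x, in_conv A x -> U x)
  (hconv : convex_on U f) (hdiff : has_gradient_on d U f g)
  (hmu : 0 <= mu)
  (hsc : forall x y, in_conv A x -> in_conv A y ->
           f y - f x - dot d (g x) (vsub y x) >= mu / 2 * (norm d (vsub y x)) ^ 2) :
  forall W, is_inf (PWidth_set d A) W ->
  forall y, muA_set d A f g y -> mu * W ^ 2 <= y.
Proof.
  intros W HW y0 Hy.
  destruct Hy as [x [xs [s [v [Hx [Hxs [Hneg [Hsf [Hvf Hy]]]]]]]]].
  pose proof (hsc x xs Hx Hxs) as Hsc.
  set (G := g x) in *.
  destruct Hvf as [[S0 [[HS0A [HS0nd [cS [HcS1 [HcS2 HcS3]]]]] [HvS0 HvSmax]]] _].
  destruct Hsf as [HsA Hsmin].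
  set (b := fun i => - G i).
  destruct (gmin d b (Gs A x)) as [p [Hpc Hpm]].
  destruct (kkt d b (Gs A x) p Hpc Hpm) as [Hq1 Hq2].
  set (q := fun i => b i - p i) in *.
  assert (HqA : forall a, In a A -> dot d q (vsub a x) <= 0).
  { intros a Ha. apply Hq1. unfold Gs. apply (in_map (fun a => vsub a x)). auto. }
  assert (HqD : forall z, in_conv A z -> dot d q (vsub z x) <= 0).
  { intros z Hz. unfold vsub. rewrite dot_subr.
    assert (dot d q z <= dot d q x).
    { apply (conv_bound_le d A); auto. intros a Ha. specialize (HqA a Ha).
      unfold vsub in HqA. rewrite dot_subr in HqA. lra. }
    lra. }
  set (e := vsub xs x).
  set (c0 := dot d b e).
  assert (Hc0 : 0 < c0).
  { unfold c0, b. rewrite dot_oppl. unfold e. lra. }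
  assert (Hce : c0 <= dot d p e).
  { unfold c0. rewrite (dot_ext d b (fun i => p i + q i) e e) by (intros; unfold q; ring).
    rewrite dot_addl. assert (dot d q e <= 0) by (apply HqD; auto). lra. }
  assert (Hpp : 0 < dot d p p).
  { destruct (dot_pos d p) as [|E]; auto. symmetry in E.
    rewrite (dot_null d p E) in Hce. lra. }
  set (np := norm d p).
  assert (Hnp : 0 < np) by (apply sqrt_lt_R0; auto).
  assert (HCS : dot d p e <= np * norm d e) by apply CS.
  assert (HS0K : forall w, In w S0 -> dot d q (vsub w x) = 0).
  { assert (Hsum : sm S0 (fun w => - (cS w * dot d q (vsub w x))) = 0).
    { rewrite sm_opp.
      transitivity (- (sm S0 (fun w => cS w * dot d q w) - sm S0 cS * dot d q x)).
      - f_equal. rewrite <- sm_scalr, <- sm_minus. apply sm_ext. intros w _.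
        unfold vsub. rewrite dot_subr. ring.
      - rewrite <- dot_lsum. rewrite csum_sm in HcS2. rewrite HcS2.
        rewrite (dot_ext d q q (lsum S0 cS) x) by (intros; auto; symmetry; auto). ring. }
    intros w Hw.
    assert (Hnn : forall w, In w S0 -> 0 <= - (cS w * dot d q (vsub w x))).
    { intros w0 Hw0. specialize (HcS1 w0 Hw0). specialize (HqA w0 (HS0A w0 Hw0)). nra. }
    assert (Hz := sm_zero_nonneg S0 _ Hnn Hsum w Hw).
    specialize (HcS1 w Hw). assert (cS w * dot d q (vsub w x) = 0) by lra.
    apply Rmult_integral in H. destruct H; lra. }
  set (K := fun z => in_conv A z /\ dot d q (vsub z x) = 0).
  assert (HS0B : forall w, In w S0 -> In w A /\ K w).
  { intros w Hw. split; auto. split; [apply in_conv_pt; auto|apply HS0K; auto]. }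
  assert (HSx0 : Sx (fun bb => In bb A /\ K bb) x S0).
  { split; auto. split; auto. exists cS. auto. }
  destruct (maxS d A (fun bb => In bb A /\ K bb) p x S0 (fun s Hs => proj1 Hs) HSx0) as [m0 Hm0].
  set (h := fun pr : vec * vec => dot d (vscale (/ norm d p) p) (vsub (fst pr) (snd pr))).
  set (P := fun t => exists S, Sx (fun bb => In bb A /\ K bb) x S /\
     is_max_of (fun y => exists s v, (In s A /\ K s) /\ In v S /\ y = dot d (vscale (/ norm d p) p) (vsub s v)) t).
  destruct (argmin (list_prod A A) (fun pr => P (h pr)) h) as [pr0 [_ [Hpr0P Hpr0min]]].
  { pose proof Hm0 as Hm0c. destruct Hm0c as [[s0 [v0 [Hs0 [Hv0 Hm0e]]]] _].
    exists (s0, v0). split; [apply in_prod; [apply Hs0|apply HS0A; auto]|].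
    exists S0. split; auto. unfold h; simpl. rewrite <- Hm0e. exact Hm0. }
  assert (HPd : PdirW_is d (fun bb => In bb A /\ K bb) p x (h pr0)).
  { split; [apply Hpr0P|]. intros t [S [HSx [[s1 [v1 [Hs1 [Hv1 Ht]]]] Hmx]]].
    assert (HP1 : P (h (s1, v1))). { exists S. split; auto. unfold h; simpl. rewrite <- Ht. split; auto.
      exists s1, v1; auto. }
    rewrite Ht. apply (Hpr0min (s1, v1)); auto. apply in_prod. apply Hs1.
    destruct HSx as [HSB _]. apply HSB; auto. }
  set (de := dot d G v - dot d G s).
  assert (Hm0d : m0 <= / np * de).
  { destruct Hm0 as [[s0 [v0 [[Hs0A Hs0K] [Hv0 Hm0e]]]] _]. rewrite Hm0e.
    unfold vscale. rewrite dot_scall. fold np. apply Rmult_le_compat_l; [left; apply Rinv_0_lt_compat; auto|].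
    rewrite (dot_ext d p (fun i => b i - q i) (vsub s0 v0) (vsub s0 v0)) by (intros; unfold q; auto; ring).
    rewrite dot_subl.
    assert (E : dot d q (vsub s0 v0) = 0).
    { rewrite (dot_ext d q q _ (fun i => (s0 i - x i) - (v0 i - x i))) by (intros; unfold vsub; auto; ring).
      rewrite dot_subr. destruct Hs0K as [_ E1]. unfold vsub in E1. rewrite E1.
      pose proof (HS0K v0 Hv0) as E2. unfold vsub in E2. rewrite E2. ring. }
    rewrite E. unfold b. rewrite dot_oppl. unfold vsub. rewrite dot_subr.
    specialize (Hsmin s0 Hs0A). specialize (HvSmax v0 Hv0). unfold de. lra. }
  assert (HKx : K x).
  { split; auto. rewrite dot_comm. apply dot_vanish. intros; unfold vsub; ring. }
  assert (Hel : PWidth_set d A (h pr0)).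
  { exists K, x, p. split; [|split; [exists x; exact HKx|split; [|split; [|split]]]].
    - split; [intros z [Hz _]; auto|split].
      + intros x1 x2 t [H1 E1] [H2 E2] Ht. split; [apply conv_comb; auto|].
        rewrite (dot_ext d q q _ (fun i => t * (x1 i - x i) + (1 - t) * (x2 i - x i))) by
          (intros; auto; unfold vsub, vadd, vscale; ring).
        rewrite dot_addr, !dot_scalr. unfold vsub in E1, E2. rewrite E1, E2. ring.
      + intros x1 x2 t H1 H2 Ht [_ E].
        rewrite (dot_ext d q q _ (fun i => t * (x1 i - x i) + (1 - t) * (x2 i - x i))) in E by
          (intros; auto; unfold vsub, vadd, vscale; ring).
        rewrite dot_addr, !dot_scalr in E.
        pose proof (HqD x1 H1) as F1. pose proof (HqD x2 H2) as F2. unfold vsub in F1, F2.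
        assert (dot d q (fun i => x1 i - x i) = 0) by nra.
        assert (dot d q (fun i => x2 i - x i) = 0) by nra.
        split; split; auto.
    - exact HKx.
    - destruct Hpc as [T [cs [HT [Hcs Hp]]]].
      set (La := lcR T cs (fun _ => 1)).
      assert (HLa0 : 0 <= La).
      { unfold La. replace 0 with (lcR T cs (fun _ => 0)) by (apply lcR_zero; auto).
        apply lcR_le; auto. intros; lra. }
      assert (HLa : 0 < La).
      { destruct HLa0 as [|E]; auto. exfalso. symmetry in E.
        assert (dot d p p = 0); [|lra]. apply dot_vanish. intros i _. rewrite Hp.
        apply (lcI_null T cs Hcs E). }
      destruct (cone_pt A x T cs HT Hcs) as [c [Hc1 [Hc2 Hc3]]].
      set (y1 := fun i => x i + p i / La).
      exists (y1 :: nil), (fun _ : vec => La). split.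
      + intros k [<-|[]]. split; [|lra]. split.
        * exists (fun a => c a / La). split; [intros; apply Rle_mult_inv_pos; auto|split].
          -- rewrite csum_sm in *. unfold Rdiv. rewrite sm_scalr. fold La in Hc2. rewrite Hc2. field. lra.
          -- intros i. transitivity (lsum A c i / La).
             ++ rewrite Hc3, <- Hp. fold La. unfold y1. field. lra.
             ++ rewrite !lsum_sm. unfold Rdiv. rewrite <- sm_scalr. apply sm_ext; intros; ring.
        * rewrite (dot_ext d q q _ (fun i => / La * p i)) by (intros; auto; unfold vsub, y1; field; lra).
          rewrite dot_scalr, Hq2. ring.
      + intros i. simpl. unfold y1. field. lra.
    - apply NNPP. intro Hn.
      assert (dot d p p = 0); [|lra]. apply dot_vanish. intros i Hi. apply NNPP. intro.
      apply Hn. exists i. auto.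
    - exact HPd. }
  assert (HW1 : W <= h pr0) by (apply HW; auto).
  assert (HW0 : 0 <= W) by (apply HW; intros; apply (width_nonneg d A); auto).
  assert (Ht0 : h pr0 <= m0) by (apply (proj2 HPd); exists S0; split; auto).
  assert (Hs_xs : dot d G s <= dot d G xs) by (apply (conv_bound_ge d A); auto).
  assert (Hx_v : dot d G x <= dot d G v).
  { rewrite (dot_ext d G G x (lsum S0 cS)) by auto. rewrite dot_lsum.
    replace (dot d G v) with (sm S0 (fun w => cS w * dot d G v))
      by (rewrite sm_scalr; rewrite csum_sm in HcS2; rewrite HcS2; ring).
    apply sm_le. intros w Hw. specialize (HcS1 w Hw). specialize (HvSmax w Hw). nra. }
  assert (Hneg' : dot d G xs - dot d G x < 0) by (unfold vsub in Hneg; rewrite dot_subr in Hneg; lra).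
  assert (Hde : 0 < de) by (unfold de; lra).
  assert (Hgam : gammaA d G x xs s v = c0 / de).
  { unfold gammaA. f_equal. unfold vopp, vsub. rewrite dot_oppl, dot_subr. unfold de. ring. }
  set (ne := norm d e) in *.
  assert (Hne0 : 0 <= ne) by apply sqrt_pos.
  assert (Hne2 : ne ^ 2 = dot d e e) by (apply pow2_sqrt; apply dot_pos).
  assert (HWd : W <= / np * de) by lra.
  assert (HWc : W * c0 <= de * ne).
  { apply Rle_trans with (W * (np * ne)). apply Rmult_le_compat_l; lra.
    apply Rle_trans with ((/ np * de) * (np * ne)). apply Rmult_le_compat_r; [nra|lra].
    right. field. lra. }
  rewrite Hy, Hgam. fold e in Hsc. fold ne in Hsc.
  set (F := f xs - f x - dot d G (vsub xs x)) in *. assert (HF : F >= mu / 2 * ne ^ 2) by exact Hsc.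
  assert (HWc2 : W ^ 2 * c0 ^ 2 <= de ^ 2 * ne ^ 2).
  { assert (0 <= W * c0) by nra. nra. }
  assert (Hgoal : mu * W ^ 2 * c0 ^ 2 <= 2 * de ^ 2 * F).
  { assert (mu * (W ^ 2 * c0 ^ 2) <= mu * (de ^ 2 * ne ^ 2)) by (apply Rmult_le_compat_l; auto).
    assert (de ^ 2 * (mu * ne ^ 2) <= de ^ 2 * (2 * F)) by (apply Rmult_le_compat_l; [nra|lra]).
    nra. }
  replace (2 / (c0 / de) ^ 2 * F) with ((2 * de ^ 2 * F) / c0 ^ 2) by (field; lra).
  assert (Hc2 : 0 < c0 ^ 2) by (apply pow_lt; lra).
  apply Rmult_le_reg_r with (c0 ^ 2); auto.
  replace (2 * de ^ 2 * F / c0 ^ 2 * c0 ^ 2) with (2 * de ^ 2 * F) by (field; lra). lra.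
Qed.
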